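(* Let $1/2<\delta<1$. Consider a finite point set $P\subset\mathbb{R}^1$ containing the source $s$ and a point $q\notin P$. Let $\rho_{\mathrm{old}}(p)$ be the range of a point $p$ in the source-based assignment $\rho_{\mathrm{sb}}(P)$ and $\rho_{\mathrm{new}}(p)$ its range in $\rho_{\mathrm{sb}}(P\cup\{q\})$ (ranges of points not in the set being $0$). Then $$\big|\{p\in P\cup\{q\}:\rho_{\mathrm{old}}(p)<\rho_{\mathrm{new}}(p)\}\big|\le 2\quad\text{and}\quad\big|\{p\in P\cup\{q\}:\rho_{\mathrm{old}}(p)>\rho_{\mathrm{new}}(p)\}\big|\le 1.$$
   Context: Points of $P\subset\mathbb{R}^1$ other than $s$ left of $s$ are $\ell_1,\ell_2,\dots$ and right of $s$ are $r_1,r_2,\dots$, numbered by increasing distance from $s$. The successor $\mathrm{suc}(p)$ of $r_i$ is $r_{i+1}$ and of $\ell_i$ is $\ell_{i+1}$, $s$ has the (at most) two successors $r_1,\ell_1$, and the farthest points on each side (extreme points) have no successor ($\mathrm{suc}=\mathrm{nil}$). The standard range $\rho_{\mathrm{st}}(p)$ of $p\ne s$ is $|p\,\mathrm{suc}(p)|$, or $0$ if $p$ is extreme. A point $p\ne s$ is expensive if $\mathrm{suc}(p)\ne\mathrm{nil}$ and $|p\,\mathrm{suc}(p)|>\delta\cdot|s\,\mathrm{suc}(p)|$, and cheap otherwise; $s$ is always expensive. Let $P_{\mathrm{exp}},P_{\mathrm{cheap}}$ be the sets of expensive and cheap points, and $d_{\max}=\max\{|s\,\mathrm{suc}(p)|:p\in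 P_{\mathrm{exp}}\}$ (for $p=s$ both successors are considered). The source-based range assignment is $\rho_{\mathrm{sb}}(s)=d_{\max}$, $\rho_{\mathrm{sb}}(p)=0$ for $p\in P_{\mathrm{exp}}\setminus\{s\}$, and $\rho_{\mathrm{sb}}(p)=\rho_{\mathrm{st}}(p)$ for $p\in P_{\mathrm{cheap}}$. *)

(* Defs.v *)
(* points of R^1 are elements of an ordered field R
   (realFieldType); finite point sets are finmap's {fset R}. *)
From HB Require Import structures.
From mathcomp Require Import all_boot all_order all_algebra.
From mathcomp Require Import finmap.
Set Implicit Arguments. Unset Strict Implicit. Unset Printing Implicit Defensive.
Import Order.TTheory GRing.Theory Num.Theory.
Local Open Scope ring_scope.
Local Open Scope fset_scope.

Section SourceBased.
Variable R : realFieldType.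

Definition next_right (P : {fset R}) (p : R) : option R :=
  match [seq x <- P | p < x] with
  | [::] => None
  | x0 :: _ as xs => Some (\big[Num.min/x0]_(x <- xs) x)
  end.

Definition next_left (P : {fset R}) (p : R) : option R :=
  match [seq x <- P | x < p] with
  | [::] => None
  | x0 :: _ as xs => Some (\big[Num.max/x0]_(x <- xs) x)
  end.

(* successor of a point p <> s (for p = s there are two successors,
   next_right P s and next_left P s, handled separately) *)
Definition suc (P : {fset R}) (s p : R) : option R :=
  if s < p then next_right P p
  else if p < s then next_left P p
  else None.

Definition rho_st (P : {fset R}) (s p : R) : R :=
  match suc P s p with Some x => `|p - x| | None => 0 end.

Definition expensive (P : {fset R}) (delta s p : R) : bool :=
  if p == s then true
  else match suc P s p with
       | Some x => delta * `|s - x| < `|p - x|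
       | None => false
       end.

Definition odist (s : R) (o : option R) : R :=
  match o with Some x => `|s - x| | None => 0 end.

Definition dmax_contrib (P : {fset R}) (delta s p : R) : R :=
  if p == s then Num.max (odist s (next_right P s)) (odist s (next_left P s))
  else if expensive P delta s p then odist s (suc P s p) else 0.

(* d_max (0 if no expensive point has a successor) *)
Definition d_max (P : {fset R}) (delta s : R) : R :=
  \big[Num.max/0]_(p <- P) dmax_contrib P delta s p.

Definition rho_sb (P : {fset R}) (delta s p : R) : R :=
  if p \notin P then 0
  else if p == s then d_max P delta s
  else if expensive P delta s p then 0
  else rho_st P s p.

End SourceBased.

(* Main.v *)
Require Import Defs.
From HB Require Import structures.
From mathcomp Require Import all_boot all_order all_algebra.
From mathcomp Require Import finmap.
Import Order.TTheory GRing.Theory Num.Theory.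
Local Open Scope ring_scope.
Local Open Scope fset_scope.

Section Aux.
Variable R : realFieldType.
Implicit Types (P Q : {fset R}) (p x y z : R).

Lemma bigmin_mem (x0 : R) (l : seq R) :
  \big[Num.min/x0]_(x <- l) x \in x0 :: l.
Proof.
elim: l => [|y l IH]; first by rewrite big_nil mem_head.
rewrite big_cons; case: leP => _.
  by rewrite !inE eqxx orbT.
by move: IH; rewrite !inE => /orP [->|->]; rewrite ?orbT.
Qed.

Lemma bigmin_le (x0 : R) (l : seq R) y :
  y \in x0 :: l -> \big[Num.min/x0]_(x <- l) x <= y.
Proof.
elim: l => [|z l IH]; first by rewrite inE big_nil => /eqP ->.
rewrite !inE big_cons ge_min => /or3P [/eqP yx|/eqP->|yl].
- by rewrite orbC IH ?orbT // yx mem_head.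
- by rewrite lexx.
- by rewrite orbC IH // inE yl orbT.
Qed.

Lemma bigmax_mem (x0 : R) (l : seq R) :
  \big[Num.max/x0]_(x <- l) x \in x0 :: l.
Proof.
elim: l => [|y l IH]; first by rewrite big_nil mem_head.
rewrite big_cons; case: leP => _.
  by move: IH; rewrite !inE => /orP [->|->]; rewrite ?orbT.
by rewrite !inE eqxx orbT.
Qed.

Lemma le_bigmax (x0 : R) (l : seq R) y :
  y \in x0 :: l -> y <= \big[Num.max/x0]_(x <- l) x.
Proof.
elim: l => [|z l IH]; first by rewrite inE big_nil => /eqP ->.
rewrite !inE big_cons le_max => /or3P [/eqP yx|/eqP->|yl].
- by rewrite orbC IH ?orbT // yx mem_head.
- by rewrite lexx.
- by rewrite orbC IH // inE yl orbT.
Qed.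

Lemma nrP P p :
  (forall x, next_right P p = Some x ->
     [/\ x \in P, p < x & forall y, y \in P -> p < y -> x <= y]) /\
  (next_right P p = None -> forall y, y \in P -> ~~ (p < y)).
Proof.
rewrite /next_right.
have : forall y, (y \in [seq x <- P | p < x]) = (p < y) && (y \in P).
  by move=> y; rewrite mem_filter.
case: [seq x <- P | p < x] => [|x0 xs] Hl.
  split=> // _ y yP; apply/negP => py.
  by have := Hl y; rewrite py yP.
split=> // x [Hx]; have := bigmin_mem x0 xs; rewrite Hx.
have Hb : forall y, y \in P -> p < y -> x <= y.
  by move=> y yP py; rewrite -Hx; apply: bigmin_le; rewrite Hl py.
by rewrite Hl => /andP [].
Qed.

Lemma nlP P p :
  (forall x, next_left P p = Some x ->
     [/\ x \in P, x < p & forall y, y \in P -> y < p -> y <= x]) /\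
  (next_left P p = None -> forall y, y \in P -> ~~ (y < p)).
Proof.
rewrite /next_left.
have : forall y, (y \in [seq x <- P | x < p]) = (y < p) && (y \in P).
  by move=> y; rewrite mem_filter.
case: [seq x <- P | x < p] => [|x0 xs] Hl.
  split=> // _ y yP; apply/negP => py.
  by have := Hl y; rewrite py yP.
split=> // x [Hx]; have := bigmax_mem x0 xs; rewrite Hx.
have Hb : forall y, y \in P -> y < p -> y <= x.
  by move=> y yP py; rewrite -Hx; apply: le_bigmax; rewrite Hl py.
by rewrite Hl => /andP [].
Qed.

Lemma nr_eq P Q p : {subset P <= Q} ->
  (forall z, z \in Q -> p < z -> z \in P \/ exists2 y, y \in P & p < y < z) ->
  next_right Q p = next_right P p.
Proof.
move=> sPQ H.
have [HQs HQn] := nrP Q p; have [HPs HPn] := nrP P p.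
case EQ: (next_right Q p) => [x'|]; case EP: (next_right P p) => [x|] //.
- have [x'Q px' x'm] := HQs _ EQ; have [xP px xm] := HPs _ EP.
  have h1 : x' <= x by apply: x'm => //; apply: sPQ.
  case: (H _ x'Q px') => [x'P|[y yP /andP [py yx']]].
    by rewrite (@le_anti _ _ x x') // h1 xm.
  have := xm _ yP py => xy.
  by have := lt_le_trans (le_lt_trans xy yx') h1; rewrite ltxx.
- have [x'Q px' _] := HQs _ EQ.
  case: (H _ x'Q px') => [x'P|[y yP /andP [py _]]].
    by have := HPn EP _ x'P; rewrite px'.
  by have := HPn EP _ yP; rewrite py.
- have [xP px _] := HPs _ EP.
  by have := HQn EQ _ (sPQ _ xP); rewrite px.
Qed.

Lemma nl_eq P Q p : {subset P <= Q} ->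
  (forall z, z \in Q -> z < p -> z \in P \/ exists2 y, y \in P & z < y < p) ->
  next_left Q p = next_left P p.
Proof.
move=> sPQ H.
have [HQs HQn] := nlP Q p; have [HPs HPn] := nlP P p.
case EQ: (next_left Q p) => [x'|]; case EP: (next_left P p) => [x|] //.
- have [x'Q px' x'm] := HQs _ EQ; have [xP px xm] := HPs _ EP.
  have h1 : x <= x' by apply: x'm => //; apply: sPQ.
  case: (H _ x'Q px') => [x'P|[y yP /andP [yx' py]]].
    by rewrite (@le_anti _ _ x x') // h1 xm.
  have := xm _ yP py => xy.
  by have := le_lt_trans h1 (lt_le_trans yx' xy); rewrite ltxx.
- have [x'Q px' _] := HQs _ EQ.
  case: (H _ x'Q px') => [x'P|[y yP /andP [_ py]]].
    by have := HPn EP _ x'P; rewrite px'.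
  by have := HPn EP _ yP; rewrite py.
- have [xP px _] := HPs _ EP.
  by have := HQn EQ _ (sPQ _ xP); rewrite px.
Qed.

Lemma key P s q : s \in P -> q \notin P ->
  exists2 a, a \in P & forall p, p \in P -> p != a ->
    suc (q |` P) s p = suc P s p /\
    (p = s -> next_right (q |` P) s = next_right P s /\
              next_left (q |` P) s = next_left P s).
Proof.
move=> sP qP.
have sub : {subset P <= q |` P} by move=> x xP; rewrite fset1Ur.
have qs : q != s by apply: contraNneq qP => ->.
case: (ltgtP s q) => sq; last by rewrite sq eqxx in qs.
- have [Hs Hn] := nlP P q.
  case E: (next_left P q) => [a|]; last by have := Hn E _ sP; rewrite sq.
  have [aP aq am] := Hs _ E.
  have H1 : forall p, p \in P -> p != a -> next_right (q |` P) p = next_right P p.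
    move=> p pP pa; apply: nr_eq => // z; rewrite in_fset1U => /orP [/eqP ->|] pz.
      right; exists a => //; rewrite aq andbT lt_neqAle pa /=.
      exact: am.
    by left.
  have H2 : forall p, p < q -> next_left (q |` P) p = next_left P p.
    move=> p pq; apply: nl_eq => // z; rewrite in_fset1U => /orP [/eqP ->|] zp.
      by have := lt_trans pq zp; rewrite ltxx.
    by left.
  exists a => // p pP pa; split.
    rewrite /suc; case: ifP => sp; first by rewrite H1.
    case: ifP => ps //; rewrite H2 //; exact: lt_trans ps sq.
  by move=> ps; subst p; rewrite H1 // H2.
- have [Hs Hn] := nrP P q.
  case E: (next_right P q) => [a|]; last by have := Hn E _ sP; rewrite sq.
  have [aP aq am] := Hs _ E.
  have H1 : forall p, p \in P -> p != a -> next_left (q |` P) p = next_left P p.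
    move=> p pP pa; apply: nl_eq => // z; rewrite in_fset1U => /orP [/eqP ->|] pz.
      right; exists a => //; rewrite aq /= lt_neqAle eq_sym pa /=.
      exact: am.
    by left.
  have H2 : forall p, q < p -> next_right (q |` P) p = next_right P p.
    move=> p pq; apply: nr_eq => // z; rewrite in_fset1U => /orP [/eqP ->|] zp.
      by have := lt_trans pq zp; rewrite ltxx.
    by left.
  exists a => // p pP pa; split.
    rewrite /suc; case: ifP => sp; first by rewrite H2 //; exact: lt_trans sq sp.
    by case: ifP => ps //; rewrite H1.
  by move=> ps; subst p; rewrite H1 // H2.
Qed.

Lemma le_bigmaxF (l : seq R) (F : R -> R) y :
  y \in l -> F y <= \big[Num.max/0]_(x <- l) F x.
Proof.
elim: l => [//|z l IH]; rewrite inE big_cons le_max => /orP [/eqP->|/IH->];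
  by rewrite ?lexx ?orbT.
Qed.

Lemma bigmaxF_le (l : seq R) (F : R -> R) c :
  0 <= c -> (forall y, y \in l -> F y <= c) -> \big[Num.max/0]_(x <- l) F x <= c.
Proof.
move=> c0; elim: l => [|z l IH] H; first by rewrite big_nil.
rewrite big_cons ge_max H ?mem_head //= IH // => y yl; apply: H.
by rewrite inE yl orbT.
Qed.

Lemma bigmaxF_ge0 (l : seq R) (F : R -> R) : 0 <= \big[Num.max/0]_(x <- l) F x.
Proof.
elim: l => [|z l IH]; first by rewrite big_nil.
by rewrite big_cons le_max IH orbT.
Qed.

Lemma odist_ge0 (s : R) (o : option R) : 0 <= odist s o.
Proof. by case: o => //= x. Qed.

Lemma contrib_ge0 P (delta s : R) p : 0 <= dmax_contrib P delta s p.
Proof.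
rewrite /dmax_contrib; case: ifP => _; first by rewrite le_max odist_ge0.
by case: ifP => _; rewrite ?odist_ge0.
Qed.

Lemma dmax_ge0 P (delta s : R) : 0 <= d_max P delta s.
Proof. exact: bigmaxF_ge0. Qed.

Lemma contrib_le_dmax P (delta s : R) p : p \in P ->
  dmax_contrib P delta s p <= d_max P delta s.
Proof. by move=> pP; apply: le_bigmaxF. Qed.

Lemma dmax_le P (delta s c : R) : 0 <= c ->
  (forall p, p \in P -> dmax_contrib P delta s p <= c) -> d_max P delta s <= c.
Proof. by move=> c0 H; apply: bigmaxF_le. Qed.

Lemma rho_ge0 P (delta s : R) p : 0 <= rho_sb P delta s p.
Proof.
rewrite /rho_sb; case: ifP => // _; case: ifP => _; first exact: dmax_ge0.
case: ifP => // _; rewrite /rho_st; by case: suc.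
Qed.

Lemma same P Q (delta s : R) p :
  suc Q s p = suc P s p ->
  (p = s -> next_right Q s = next_right P s /\ next_left Q s = next_left P s) ->
  expensive Q delta s p = expensive P delta s p /\
  dmax_contrib Q delta s p = dmax_contrib P delta s p /\
  rho_st Q s p = rho_st P s p.
Proof.
move=> Hs Hp; rewrite /expensive /dmax_contrib /rho_st Hs.
case: eqP => ps.
  by have [-> ->] := Hp ps.
by rewrite /expensive Hs; move/eqP/negbTE: ps => ->.
Qed.

End Aux.
Arguments bigmin_mem {R}.
Arguments bigmin_le {R}.
Arguments bigmax_mem {R}.
Arguments le_bigmax {R}.
Arguments nrP {R}.
Arguments nlP {R}.
Arguments nr_eq {R}.
Arguments nl_eq {R}.
Arguments key {R}.
Arguments le_bigmaxF {R}.
Arguments bigmaxF_le {R}.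
Arguments bigmaxF_ge0 {R}.
Arguments odist_ge0 {R}.
Arguments contrib_ge0 {R}.
Arguments dmax_ge0 {R}.
Arguments contrib_le_dmax {R}.
Arguments dmax_le {R}.
Arguments rho_ge0 {R}.
Arguments same {R}.

Theorem lemma10 (R : realFieldType) (delta : R) (P : {fset R}) (s q : R) :
  1 / 2 < delta -> delta < 1 -> s \in P -> q \notin P ->
  (#|` [fset p in (q |` P) | (rho_sb P delta s p < rho_sb (q |` P) delta s p)%R]| <= 2)%N /\
  (#|` [fset p in (q |` P) | (rho_sb (q |` P) delta s p < rho_sb P delta s p)%R]| <= 1)%N.
Proof.
move=> _ _ sP qP.
have [a aP Ha] := key P s q sP qP.
set Q := q |` P.
have qs : q != s by apply: contraNneq qP => ->.
have qa : q != a by apply: contraNneq qP => ->.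
have sQ : s \in Q by rewrite fset1Ur.
have aQ : a \in Q by rewrite fset1Ur.
have qQ : q \in Q by rewrite fset1U1.
have eqs : forall p, p \in P -> p != a ->
  expensive Q delta s p = expensive P delta s p /\
  dmax_contrib Q delta s p = dmax_contrib P delta s p /\
  rho_st Q s p = rho_st P s p.
  by move=> p pP pa; have [h1 h2] := Ha p pP pa; apply: same.
have rho_eq : forall p, p \in P -> p != a -> p != s ->
    rho_sb Q delta s p = rho_sb P delta s p.
  move=> p pP pa ps; have [e1 [_ e3]] := eqs p pP pa.
  by rewrite /rho_sb pP fset1Ur //= (negbTE ps) e1 e3.
have rhoPq : rho_sb P delta s q = 0 by rewrite /rho_sb qP.
have rhoPs : rho_sb P delta s s = d_max P delta s by rewrite /rho_sb sP eqxx.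
have rhoQs : rho_sb Q delta s s = d_max Q delta s by rewrite /rho_sb sQ eqxx.
have mem : forall p, p \in Q -> [\/ p = q, p = a, p = s |
                                   [/\ p \in P, p != a & p != s]].
  move=> p; rewrite in_fset1U => /orP [/eqP ->|pP]; first by constructor 1.
  case: (eqVneq p a) => [->|pa]; first by constructor 2.
  case: (eqVneq p s) => [->|ps]; first by constructor 3.
  by constructor 4.
have c0 : forall (S : {fset R}) p, p \in S -> p != s -> 0 < rho_sb S delta s p ->
    dmax_contrib S delta s p = 0.
  move=> S p pS ps; rewrite /rho_sb /dmax_contrib pS (negbTE ps) /=.
  by case: ifP => //; rewrite ltxx.
split.
- have HU : forall p, p \in Q -> rho_sb P delta s p < rho_sb Q delta s p ->
      [\/ p = a, p = q | p = s].
    move=> p /mem [->|->|->|[pP pa ps]]; try by [constructor 1|constructor 2|constructor 3].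
    by rewrite rho_eq // ltxx.
  have sU : rho_sb P delta s a < rho_sb Q delta s a -> a != s ->
        rho_sb P delta s q < rho_sb Q delta s q ->
        ~~ (rho_sb P delta s s < rho_sb Q delta s s).
    move=> ha as_ hq; rewrite rhoPs rhoQs -leNgt.
    apply: dmax_le; first exact: dmax_ge0.
    move=> p /mem [->|->|->|[pP pa ps]].
    + rewrite c0 //; [exact: dmax_ge0 | rewrite -rhoPq; exact: hq].
    + rewrite c0 //; first exact: dmax_ge0.
      exact: le_lt_trans (rho_ge0 _ _ _ _) ha.
    + have sa : s != a by rewrite eq_sym.
      by have [_ [-> _]] := eqs s sP sa; apply: contrib_le_dmax.
    + by have [_ [-> _]] := eqs p pP pa; apply: contrib_le_dmax.
  set U := [fset p in Q | _].
  have card2 : forall x y : R, (#|` [fset x; y]| <= 2)%N.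
    move=> x y; rewrite cardfs2; by case: (x != y).
  have sub2 : forall x y : R, (forall p, p \in U -> p = x \/ p = y) -> (#|` U| <= 2)%N.
    move=> x y H; apply: leq_trans (card2 x y); apply: fsubset_leq_card.
    apply/fsubsetP => p /H [->|->]; by rewrite ?fset21 ?fset22.
  have inU : forall p, (p \in U) = (p \in Q) && (rho_sb P delta s p < rho_sb Q delta s p).
    by move=> p; rewrite !inE.
  case: (eqVneq a s) => [as_|as_].
    apply: (sub2 s q) => p; rewrite inU => /andP [pQ /(HU _ pQ)] [->|->|->]; by auto.
  case Ea: (rho_sb P delta s a < rho_sb Q delta s a); last first.
    apply: (sub2 q s) => p; rewrite inU => /andP [pQ /[dup] hp /(HU _ pQ)] [e|->|->]; try by auto.
    by subst p; rewrite Ea in hp.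
  case Eq: (rho_sb P delta s q < rho_sb Q delta s q); last first.
    apply: (sub2 a s) => p; rewrite inU => /andP [pQ /[dup] hp /(HU _ pQ)] [->|e|->]; try by auto.
    by subst p; rewrite Eq in hp.
  apply: (sub2 a q) => p; rewrite inU => /andP [pQ /[dup] hp /(HU _ pQ)] [->|->|e]; try by auto.
  subst p; by have := sU Ea as_ Eq; rewrite hp.
- have HD : forall p, p \in Q -> rho_sb Q delta s p < rho_sb P delta s p -> p = a \/ p = s.
    move=> p /mem [->|->|->|[pP pa ps]]; try by auto.
      by rewrite rhoPq ltNge rho_ge0.
    by rewrite rho_eq // ltxx.
  set D := [fset p in Q | _].
  have inD : forall p, (p \in D) = (p \in Q) && (rho_sb Q delta s p < rho_sb P delta s p).
    by move=> p; rewrite !inE.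
  have sub1 : forall x : R, (forall p, p \in D -> p = x) -> (#|` D| <= 1)%N.
    move=> x H; rewrite -(cardfs1 x); apply: fsubset_leq_card.
    apply/fsubsetP => p /H ->; by rewrite inE.
  case: (eqVneq a s) => [as_|as_].
    apply: (sub1 s) => p; rewrite inD => /andP [pQ /(HD _ pQ)] [->|->] //.
  case Ea: (rho_sb Q delta s a < rho_sb P delta s a); last first.
    apply: (sub1 s) => p; rewrite inD => /andP [pQ /[dup] hp /(HD _ pQ)] [e|->] //.
    by subst p; rewrite Ea in hp.
  apply: (sub1 a) => p; rewrite inD => /andP [pQ /[dup] hp /(HD _ pQ)] [->|e] //.
  subst p; move: hp; rewrite rhoPs rhoQs ltNge => /negP H; exfalso; apply: H.
  apply: dmax_le; first exact: dmax_ge0.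
  have ca : dmax_contrib P delta s a = 0.
    apply: c0 => //; exact: le_lt_trans (rho_ge0 _ _ _ _) Ea.
  move=> p pP; case: (eqVneq p a) => [->|pa]; first by rewrite ca dmax_ge0.
  have [_ [<- _]] := eqs p pP pa; apply: contrib_le_dmax; exact: fset1Ur.
Qed.
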